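(* Let $\nu$ be a measure on $\mathbb{R}^d$ with $\nu(\{0\})=0$. Then $\nu\in\mathfrak{M}_L^2(\mathbb{R}^d)$ if and only if $\nu^{(2)}\in\mathfrak{M}_L^1(\mathbb{R}^d)$, and in this case $\mathcal{A}_2(\nu)=\mathcal{A}_1(\nu^{(2)})$. Also $\nu\in\mathfrak{M}_L^1(\mathbb{R}^d)$ if and only if $\nu^{(1/2)}\in\mathfrak{M}_L^2(\mathbb{R}^d)$, and in this case $\mathcal{A}_1(\nu)=\mathcal{A}_2(\nu^{(1/2)})$.
   Context: A Lévy measure on $\mathbb{R}^d$ is a measure $\nu$ with $\nu(\{0\})=0$ and $\int(1\wedge|x|^2)\nu(\mathrm{d}x)<\infty$; their class is $\mathfrak{M}_L^2(\mathbb{R}^d)$, and $\mathfrak{M}_L^1(\mathbb{R}^d)$ is the class of Lévy measures with $\int(1\wedge|x|)\nu(\mathrm{d}x)<\infty$. For $s>0$ set $a_1(r;s)=2\pi^{-1}(s-r^2)^{-1/2}$ for $0<r<s^{1/2}$ and $0$ otherwise; $a_2(r;s)=2\pi^{-1}(s^2-r^2)^{-1/2}$ for $0<r<s$ and $0$ otherwise. For a measure $\nu$ on $\mathbb{R}^d$ with $\nu(\{0\})=0$ and $k=1,2$, $\mathcal{A}_k(\nu)(B)=\int_{\mathbb{R}^d\setminus\{0\}}\nu(\mathrm{d}x)\int_0^\infty a_k(r;|x|)1_B(rx/|x|)\,\mathrm{d}r$, $B$ Borel. For $p>0$, the $(p)$-transformation of such $\nu$ is the measure $\nu^{(p)}(B)=\int_{\mathbb{R}^d\setminus\{0\}}1_B(|x|^p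 x/|x|)\,\nu(\mathrm{d}x)$. *)

(* Defs.v *)
(* R^d is modelled as [d.-tuple R] with its canonical
   product (= Borel) sigma-algebra from measurable_structure.v. *)
From HB Require Import structures.
From mathcomp Require Import all_boot all_order all_algebra.
From mathcomp Require Import all_classical all_reals all_analysis.
Set Implicit Arguments. Unset Strict Implicit. Unset Printing Implicit Defensive.
Import Order.TTheory GRing.Theory Num.Theory.
Local Open Scope classical_set_scope.
Local Open Scope ring_scope.

Section levy_defs.
Context {R : realType} {d : nat}.
Local Notation V := (d.-tuple R).

Definition vzero : V := [tuple (0 : R) | _ < d].
Definition vnorm (x : V) : R := Num.sqrt (\sum_(i < d) (tnth x i) ^+ 2).
Definition vscale (c : R) (x : V) : V := [tuple c * tnth x i | i < d].

Definition levy2 (nu : set V -> \bar R) : Prop :=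
  nu [set vzero] = 0%E /\
  (\int[nu]_x (Num.min 1 (vnorm x ^+ 2))%:E < +oo)%E.
Definition levy1 (nu : set V -> \bar R) : Prop :=
  levy2 nu /\ (\int[nu]_x (Num.min 1 (vnorm x))%:E < +oo)%E.

Definition ptransform (p : R) (nu : set V -> \bar R) : set V -> \bar R :=
  fun B => nu (~` [set vzero] `&`
               [set x | B (vscale (vnorm x `^ p / vnorm x) x)]).

Definition a1 (r s : R) : R :=
  if (0 < r) && (r < Num.sqrt s) then 2 / pi * (Num.sqrt (s - r ^+ 2))^-1
  else 0.
Definition a2 (r s : R) : R :=
  if (0 < r) && (r < s) then 2 / pi * (Num.sqrt (s ^+ 2 - r ^+ 2))^-1
  else 0.

Definition Atrans (a : R -> R -> R) (nu : set V -> \bar R) (B : set V)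
  : \bar R :=
  (\int[nu]_(x in ~` [set vzero])
     \int[lebesgue_measure]_(r in `[0%R, +oo[)
        (a r (vnorm x) * \1_B (vscale (r / vnorm x) x))%:E)%E.
Definition A1 := Atrans a1.
Definition A2 := Atrans a2.
End levy_defs.

(* Main.v *)
Require Import Defs.
From HB Require Import structures.
From mathcomp Require Import all_boot all_order all_algebra.
From mathcomp Require Import all_classical all_reals all_analysis.
Import Order.TTheory GRing.Theory Num.Theory.
Local Open Scope classical_set_scope.
Local Open Scope ring_scope.


Section vlemmas.
Context {R : realType} {n : nat}.
Local Notation V := (n.-tuple R).

Lemma tnth_vscale c (x : V) i : tnth (vscale c x) i = c * tnth x i.
Proof. by rewrite /vscale tnth_mktuple. Qed.

Lemma tnth_vzero i : tnth (vzero : V) i = 0.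
Proof. by rewrite /vzero tnth_mktuple. Qed.

Lemma vnorm_ge0 (x : V) : 0 <= vnorm x.
Proof. exact: sqrtr_ge0. Qed.

Lemma vnorm_vscale c (x : V) : vnorm (vscale c x) = `|c| * vnorm x.
Proof.
rewrite /vnorm (eq_bigr (fun i => c ^+ 2 * tnth x i ^+ 2)); last first.
  by move=> i _; rewrite tnth_vscale exprMn.
rewrite -big_distrr /= sqrtrM ?sqr_ge0 // sqrtr_sqr //.
Qed.

Lemma vnorm_vzero : vnorm (vzero : V) = 0.
Proof.
rewrite /vnorm big1 ?sqrtr0 // => i _; by rewrite tnth_vzero expr0n.
Qed.

Lemma vnorm_eq0 (x : V) : vnorm x = 0 -> x = vzero.
Proof.
move=> /eqP; rewrite sqrtr_eq0 => hle.
have h0 : \sum_(i < n) tnth x i ^+ 2 = 0.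
  by apply/eqP; rewrite eq_le hle sumr_ge0 // => i _; exact: sqr_ge0.
apply: eq_from_tnth => i; rewrite tnth_vzero.
have /psumr_eq0P : (forall i, true -> 0 <= tnth x i ^+ 2) by move=> j _; exact: sqr_ge0.
move=> /(_ h0 i isT) /eqP; by rewrite sqrf_eq0 => /eqP.
Qed.

Lemma vscale_vscale c c' (x : V) : vscale c (vscale c' x) = vscale (c * c') x.
Proof. by apply: eq_from_tnth => i; rewrite !tnth_vscale mulrA. Qed.

Lemma vscale1 (x : V) : vscale 1 x = x.
Proof. by apply: eq_from_tnth => i; rewrite !tnth_vscale mul1r. Qed.

Lemma vscale_vzero c : vscale c (vzero : V) = vzero.
Proof. by apply: eq_from_tnth => i; rewrite !tnth_vscale tnth_vzero mulr0. Qed.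

Definition Tp (p : R) (x : V) : V := vscale (vnorm x `^ p / vnorm x) x.

Lemma Tp0 p : Tp p vzero = vzero.
Proof. by rewrite /Tp vscale_vzero. Qed.

Lemma vnorm_Tp p (x : V) : x <> vzero -> vnorm (Tp p x) = vnorm x `^ p.
Proof.
move=> x0; have a0 : 0 < vnorm x.
  by rewrite lt_neqAle vnorm_ge0 andbT eq_sym; apply/eqP => /vnorm_eq0.
rewrite /Tp vnorm_vscale ger0_norm ?divr_ge0 ?powR_ge0 ?vnorm_ge0 //.
by rewrite divfK // gt_eqF.
Qed.

Lemma Tp_eq0 p (x : V) : (Tp p x = vzero) <-> (x = vzero).
Proof.
split; last by move=> ->; exact: Tp0.
move=> h; apply: contrapT => x0.
have := vnorm_Tp p x x0; rewrite h vnorm_vzero => /esym/eqP.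
by rewrite powR_eq0 => /andP[/eqP /vnorm_eq0].
Qed.

Lemma TpK p q (x : V) : p * q = 1 -> Tp q (Tp p x) = x.
Proof.
move=> pq; have [->|x0] := eqVneq x vzero; first by rewrite !Tp0.
have a0 : 0 < vnorm x.
  by rewrite lt_neqAle vnorm_ge0 andbT eq_sym; apply/eqP => /vnorm_eq0/eqP; rewrite (negbTE x0).
rewrite {1}/Tp vnorm_Tp; last by move/eqP: x0.
rewrite /Tp vscale_vscale -powRrM pq powRr1 ?vnorm_ge0 //.
rewrite mulrA divfK ?mulfV ?vscale1 ?gt_eqF // powR_gt0 //.
Qed.
End vlemmas.


Section meas.
Context {R : realType} {n : nat}.
Local Notation V := (n.-tuple R).

Lemma measurable_vnorm : measurable_fun [set: V] (@vnorm R n).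
Proof.
apply: measurableT_comp; first exact: measurable_realfun.continuous_measurable_fun (@sqrt_continuous R).
apply: measurable_sum => i; apply: measurable_realfun.measurable_funX; exact: measurable_tnth.
Qed.

Lemma measurable_Tp p : measurable_fun [set: V] (Tp p).
Proof.
apply/measurable_fun_tnthP => i.
rewrite (_ : _ \o _ = fun x => (vnorm x `^ p * vnorm x `^ (1 *- 1)) * tnth x i); last first.
  apply/funext => x /=; rewrite tnth_vscale powR_invn ?vnorm_ge0 ?expr1 //.
apply: measurable_realfun.measurable_funM; last exact: measurable_tnth.
apply: measurable_realfun.measurable_funM; apply: measurableT_comp (measurable_realfun.measurable_powR _) measurable_vnorm.
Qed.
End meas.


Section transfer.
Local Open Scope ereal_scope.
Context d (X : measurableType d) (R : realType).
Variables (mu : {measure set X -> \bar R}) (D : set X) (mD : measurable D).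
Variables (phi psi : X -> X).
Hypotheses (mphi : measurable_fun setT phi) (mpsi : measurable_fun setT psi).
Hypotheses (phiK : forall x, psi (phi x) = x) (psiK : forall x, phi (psi x) = x).
Hypothesis (phiD : forall x, D (phi x) <-> D x).

Definition mtr := fun B => mu (D `&` [set x | B (phi x)]).

Let mtr0 : mtr set0 = 0.
Proof. by rewrite /mtr (_ : [set x | set0 (phi x)] = set0) ?setI0 ?measure0. Qed.

Let mtr_ge0 A : 0 <= mtr A.
Proof. exact: measure_ge0. Qed.

Let mtr_sigma_additive : semi_sigma_additive mtr.
Proof.
move=> F mF tF mUF; rewrite /mtr.
have mpre Y : measurable Y -> measurable (D `&` phi @^-1` Y).
  move=> mY; apply: measurableI => //; rewrite -[X in measurable X]setTI; exact: mphi.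
have -> : D `&` [set x | (\bigcup_n F n) (phi x)] = \bigcup_n (D `&` phi @^-1` F n).
  apply/seteqP; split=> [x [Dx [k _ Fk]]|x [k _ [Dx Fk]]]; first by exists k.
  by split => //; exists k.
apply: measure_semi_sigma_additive.
- move=> k; exact: mpre.
- apply/trivIsetP => /= i j _ _ ij; rewrite setIACA setIid -preimage_setI.
  by move/trivIsetP : tF => /(_ _ _ _ _ ij) ->//; rewrite preimage_set0 setI0.
- rewrite -setI_bigcupr -preimage_bigcup; exact: mpre.
Qed.

HB.instance Definition _ := isMeasure.Build _ _ _ mtr mtr0 mtr_ge0 mtr_sigma_additive.


Import HBNNSimple.

Let comp_nnsfun (h : {nnsfun X >-> R}) (g : X -> X) (mg : measurable_fun setT g)
  : {nnsfun X >-> R} :=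
  HB.pack (h \o g)
    (isMeasurableFun.Build _ _ _ _ (h \o g) (measurableT_comp (measurable_funPT h) mg))
    (@FiniteImage.Build X R (h \o g)
       (sub_finite_set (fun _ '(ex_intro2 x _ e) => ex_intro2 _ _ (g x) I e) (fimfunP h)))
    (@isNonNegFun.Build X R (h \o g) (fun x => fun_ge0 (g x))).

Lemma transfer (f : X -> \bar R) : (forall x, D x -> 0 <= f x) ->
  \int[mtr]_(y in D) f y = \int[mu]_(x in D) f (phi x).
Proof.
move=> f0.
have f0' : forall x, D x -> 0 <= f (phi x) by move=> x Dx; apply: f0; apply/phiD.
rewrite ge0_integralE // ge0_integralE //.
apply/eqP; rewrite eq_le; apply/andP; split.
- apply: ge_ereal_sup => _ [h hf <-].
  apply: ereal_sup_ubound.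
  exists (proj_nnsfun (comp_nnsfun h phi mphi) mD).
    move=> x; rewrite -mrestrict.
    have [Dx|Dx] := boolP (x \in D).
      rewrite !patchT //; apply: le_trans (hf (phi x)) _.
      by rewrite patchT // inE; apply/phiD; rewrite -inE.
    by rewrite !patchC ?in_setC //=.
  rewrite /sintegral; apply: eq_fsbigr => r _.
  have [->|r0] := eqVneq r 0%R; first by rewrite !mul0e.
  congr (_ * _); rewrite /mtr; congr (mu _).
  rewrite -mrestrict; apply/seteqP; split => x /=.
    have [Dx|Dx] := boolP (x \in D).
      by rewrite patchT // => <-; split => //; rewrite -inE.
    by rewrite patchC ?in_setC // => h0; move: r0; rewrite -h0 eqxx.
  by move=> [Dx <-]; rewrite patchT // inE.
- apply: ge_ereal_sup => _ [g gf <-].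
  apply: ereal_sup_ubound.
  exists (proj_nnsfun (comp_nnsfun g psi mpsi) mD).
    move=> x; rewrite -mrestrict.
    have [Dx|Dx] := boolP (x \in D).
      have Dpx : psi x \in D by rewrite inE -phiD psiK -inE.
      rewrite !patchT //; apply: le_trans (gf (psi x)) _.
      by rewrite patchT //= psiK.
    by rewrite !patchC ?in_setC //=.
  rewrite /sintegral; apply: eq_fsbigr => r _.
  have [->|r0] := eqVneq r 0%R; first by rewrite !mul0e.
  congr (_ * _); rewrite /mtr; congr (mu _).
  rewrite -mrestrict; apply/seteqP; split => x /=.
    by move=> [Dx]; rewrite patchT ?inE ?phiD //= phiK => <-.
  move=> gx.
  have Dx : D x.
    apply: contrapT => Dx; move: (gf x); rewrite patchC; last by rewrite inE.
    rewrite gx lee_fin => rle; move/negP: r0; apply; rewrite eq_le rle -gx.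
    exact: fun_ge0.
  by split => //; rewrite patchT ?inE ?phiD //= phiK.
Qed.

End transfer.


Section main.
Context {R : realType} {n : nat}.
Local Notation V := (n.-tuple R).
Variable nu : {measure set V -> \bar R}.
Let D : set V := ~` [set vzero].

Lemma mD : measurable D.
Proof.
apply: measurableC.
have -> : [set vzero] = [set: V] `&` (@vnorm R n) @^-1` [set 0].
  apply/seteqP; split => x /=; first by move=> ->; rewrite vnorm_vzero.
  by move=> [_ /vnorm_eq0].
exact: measurable_vnorm.
Qed.

Lemma TpD p x : D (Tp p x) <-> D x.
Proof. split => h e; apply: h; [exact/Tp_eq0 | exact/(Tp_eq0 p)]. Qed.

Lemma int_D (m : set V -> \bar R) (f : V -> \bar R) : f vzero = 0%E ->
  (\int[m]_x f x = \int[m]_(x in D) f x)%E.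
Proof.
move=> f0; have e : (fun x => f x) \_ setT = f \_ D.
  apply/funext => x; rewrite /patch in_setT; case: ifPn => // hx.
  have -> : x = vzero by apply: contrapT => h; move/negP: hx; apply; rewrite in_setE.
  by [].
by rewrite /integral e.
Qed.

Lemma tr_D p q (f : V -> \bar R) : p * q = 1 -> (forall x, D x -> 0 <= f x)%E ->
  (\int[ptransform p nu]_(x in D) f x = \int[nu]_(x in D) f (Tp p x))%E.
Proof.
move=> pq f0; rewrite (_ : ptransform p nu = @mtr _ _ _ nu D (Tp p)) //.
have H := (@transfer _ _ _ nu D mD (Tp p) (Tp q) (measurable_Tp p) (measurable_Tp q)
  (fun x => TpK p q x pq) (fun x => TpK q p x (etrans (mulrC q p) pq)) (@TpD p) f f0).
exact: H.
Qed.


Lemma vnorm_gt0 x : D x -> 0 < vnorm x.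
Proof.
move=> Dx; rewrite lt_neqAle vnorm_ge0 andbT eq_sym; apply/eqP => /vnorm_eq0; exact: Dx.
Qed.

Lemma Tp2E (x : V) : Tp 2 x = vscale (vnorm x) x.
Proof.
rewrite /Tp powR_mulrn ?vnorm_ge0 // expr2.
by have [->|a0] := eqVneq (vnorm x) 0; [rewrite !mul0r | rewrite mulfK].
Qed.

Lemma vnorm_Tp2 (x : V) : vnorm (Tp 2 x) = vnorm x ^+ 2.
Proof. by rewrite Tp2E vnorm_vscale ger0_norm ?vnorm_ge0 // expr2. Qed.

Lemma TphE (x : V) : Tp (2^-1) x = vscale (Num.sqrt (vnorm x) / vnorm x) x.
Proof. by rewrite /Tp powR12_sqrt ?vnorm_ge0. Qed.

Lemma vnorm_Tph (x : V) : vnorm (Tp (2^-1) x) = Num.sqrt (vnorm x).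
Proof.
have [->|x0] := eqVneq x vzero; first by rewrite Tp0 vnorm_vzero sqrtr0.
by rewrite vnorm_Tp ?powR12_sqrt ?vnorm_ge0 //; apply/eqP.
Qed.

Lemma idA1 (B : set V) x r : D x ->
  a1 r (vnorm (Tp 2 x)) * \1_B (vscale (r / vnorm (Tp 2 x)) (Tp 2 x)) =
  a2 r (vnorm x) * \1_B (vscale (r / vnorm x) x).
Proof.
move=> /vnorm_gt0 a0; rewrite vnorm_Tp2 Tp2E vscale_vscale.
have -> : r / vnorm x ^+ 2 * vnorm x = r / vnorm x.
  by rewrite expr2 invfM mulrA mulfVK // gt_eqF.
by rewrite /a1 /a2 sqrtr_sqr ger0_norm ?vnorm_ge0.
Qed.

Lemma idA2 (B : set V) x r : D x ->
  a2 r (vnorm (Tp (2^-1) x)) * \1_B (vscale (r / vnorm (Tp (2^-1) x)) (Tp (2^-1) x)) =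
  a1 r (vnorm x) * \1_B (vscale (r / vnorm x) x).
Proof.
move=> /vnorm_gt0 a0; rewrite vnorm_Tph TphE vscale_vscale.
have s0 : 0 < Num.sqrt (vnorm x) by rewrite sqrtr_gt0.
have -> : r / Num.sqrt (vnorm x) * (Num.sqrt (vnorm x) / vnorm x) = r / vnorm x.
  by rewrite mulrA mulfVK // gt_eqF.
by rewrite /a1 /a2 sqr_sqrtr ?vnorm_ge0.
Qed.

Lemma trT p q (f : V -> R) : p * q = 1 -> (forall x, 0 <= f x) -> f vzero = 0 ->
  (\int[ptransform p nu]_x (f x)%:E = \int[nu]_x (f (Tp p x))%:E)%E.
Proof.
move=> pq f0 fz.
rewrite int_D ?fz // (@tr_D p q) // ?int_D //= ?Tp0 ?fz // => x _; exact: f0.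
Qed.

Lemma le_int (f g : V -> R) : (forall x, 0 <= f x) -> (forall x, f x <= g x) ->
  (\int[nu]_x (f x)%:E <= \int[nu]_x (g x)%:E)%E.
Proof.
move=> f0 fg; rewrite !ge0_integralTE // => [|x]; last by rewrite lee_fin (le_trans (f0 x)).
apply: le_ereal_sup => _ [h hf <-]; exists h => // x; apply: le_trans (hf x) _.
by rewrite lee_fin.
Qed.

Lemma pt0 p : ptransform p nu [set vzero] = 0%E.
Proof.
rewrite /ptransform (_ : _ `&` _ = set0) ?measure0 //; apply/seteqP; split => x //=.
move=> [hx h]; apply: hx; exact/(Tp_eq0 p).
Qed.

End main.


Lemma minle (R : realType) (t : R) : 0 <= t -> Num.min 1 (t ^+ 2) <= Num.min 1 t.
Proof.
move=> t0; rewrite le_min ge_min lexx /= ge_min.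
have [t1|t1] := leP 1 t; first by apply/orP; left.
by apply/orP; right; rewrite expr2; have := ler_wpM2r t0 (ltW t1); rewrite mul1r.
Qed.

Lemma min0 (R : realType) (t : R) : 0 <= t -> 0 <= Num.min 1 t.
Proof. by move=> t0; rewrite le_min ler01 t0. Qed.

Lemma minz (R : realType) : Num.min 1 (0 : R) = 0.
Proof. by rewrite minEle ler10. Qed.
Lemma a1_ge0 (R : realType) (r s : R) : 0 <= a1 r s.
Proof.
rewrite /a1; case: ifP => // _; rewrite mulr_ge0 ?invr_ge0 ?sqrtr_ge0 ?divr_ge0 //.
exact: pi_ge0.
Qed.

Lemma E1 (R : realType) (n : nat)
  (nu : {measure set (n.-tuple R) -> \bar R}) : (\int[ptransform 2 nu]_x (Num.min 1 (vnorm x))%:E =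
           \int[nu]_x (Num.min 1 (vnorm x ^+ 2))%:E)%E.
Proof.
have h2 : (2:R) * 2^-1 = 1 by rewrite mulfV // pnatr_eq0.
rewrite (@trT _ _ nu 2 (2^-1) (fun x => Num.min 1 (vnorm x)) h2).
- by apply: eq_integral => x _; rewrite vnorm_Tp2.
- by move=> x; apply: min0; exact: vnorm_ge0.
- by rewrite vnorm_vzero minz.
Qed.

Lemma a2_ge0 (R : realType) (r s : R) : 0 <= a2 r s.
Proof.
rewrite /a2; case: ifP => // _; rewrite mulr_ge0 ?invr_ge0 ?sqrtr_ge0 ?divr_ge0 //.
exact: pi_ge0.
Qed.

Lemma E2 (R : realType) (n : nat)
  (nu : {measure set (n.-tuple R) -> \bar R}) :
  (\int[ptransform 2 nu]_x (Num.min 1 (vnorm x ^+ 2))%:E =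
           \int[nu]_x (Num.min 1 ((vnorm x ^+ 2) ^+ 2))%:E)%E.
Proof.
have h2 : (2:R) * 2^-1 = 1 by rewrite mulfV // pnatr_eq0.
rewrite (@trT _ _ nu 2 (2^-1) (fun x => Num.min 1 (vnorm x ^+ 2)) h2).
- by apply: eq_integral => x _; rewrite vnorm_Tp2.
- by move=> x; apply: min0; exact: sqr_ge0.
- by rewrite vnorm_vzero expr0n /= minz.
Qed.

Lemma E3 (R : realType) (n : nat)
  (nu : {measure set (n.-tuple R) -> \bar R}) :
  (\int[ptransform (2^-1) nu]_x (Num.min 1 (vnorm x ^+ 2))%:E =
           \int[nu]_x (Num.min 1 (vnorm x))%:E)%E.
Proof.
have h2' : (2:R)^-1 * 2 = 1 by rewrite mulVf // pnatr_eq0.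
rewrite (@trT _ _ nu (2^-1) 2 (fun x => Num.min 1 (vnorm x ^+ 2)) h2').
- by apply: eq_integral => x _; rewrite vnorm_Tph sqr_sqrtr ?vnorm_ge0.
- by move=> x; apply: min0; exact: sqr_ge0.
- by rewrite vnorm_vzero expr0n /= minz.
Qed.

Theorem proposition2p5 (R : realType) (n : nat)
  (nu : {measure set (n.-tuple R) -> \bar R}) :
  nu [set vzero] = 0%E ->
  ((levy2 nu <-> levy1 (ptransform 2 nu)) /\
   (levy2 nu -> forall B : set (n.-tuple R), measurable B ->
      A2 nu B = A1 (ptransform 2 nu) B)) /\
  ((levy1 nu <-> levy2 (ptransform (2^-1) nu)) /\
   (levy1 nu -> forall B : set (n.-tuple R), measurable B ->
      A1 nu B = A2 (ptransform (2^-1) nu) B)).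
Proof.
move=> nu0.
have h2 : (2:R) * 2^-1 = 1 by rewrite mulfV // pnatr_eq0.
have h2' : (2:R)^-1 * 2 = 1 by rewrite mulVf // pnatr_eq0.
split; split.
- split.
  + move=> [_ h]; split; [split; [exact: pt0|] |]; last by rewrite E1.
    rewrite E2; apply: le_lt_trans h; apply: le_int.
      by move=> x; apply: min0; exact: sqr_ge0.
    by move=> x; apply: minle; exact: sqr_ge0.
  + by move=> [_ h]; split => //; rewrite -E1.
- move=> _ B _; rewrite /A1 /A2 /Atrans (@tr_D _ _ nu 2 (2^-1) _ h2).
    apply: eq_integral => x; rewrite inE => Dx.
    by apply: eq_integral => r _; rewrite idA1.
  move=> x _; apply: integral_ge0 => r _; rewrite lee_fin mulr_ge0 ?a1_ge0 //.
- split.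
  + move=> [_ h]; split; [exact: pt0|]; by rewrite E3.
  + move=> [_ h]; rewrite E3 in h; split => //; split => //.
    apply: le_lt_trans h; apply: le_int.
      by move=> x; apply: min0; exact: sqr_ge0.
    by move=> x; apply: minle; exact: vnorm_ge0.
- move=> _ B _; rewrite /A1 /A2 /Atrans (@tr_D _ _ nu (2^-1) 2 _ h2').
    apply: eq_integral => x; rewrite inE => Dx.
    by apply: eq_integral => r _; rewrite idA2.
  move=> x _; apply: integral_ge0 => r _; rewrite lee_fin mulr_ge0 ?a2_ge0 //.
Qed.
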